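(* Let $K$ be an infinite commutative domain and $R$ a unital associative $K$-algebra on which $K$ acts torsion-freely. Suppose $(R,\cdot)$ satisfies a semigroup identity $u=v$, and write $u=au'b$, $v=av'b$ with $a,b$ (possibly empty) words and $u',v'$ words such that $u'=v'$ is reduced. Then $(R,\cdot)$ satisfies $u'=v'$.
   Context: A semigroup identity $u=v$ ($u\neq v$ words in the free semigroup on variables $x_1,x_2,\dots$) holds in a semigroup if both sides agree under every substitution. The identity $u'=v'$ is reduced if the first letters of $u'$ and $v'$ differ and the last letters of $u'$ and $v'$ differ. *)

(* Defs.v *)
From mathcomp Require Import all_boot all_algebra.
Set Implicit Arguments. Unset Strict Implicit. Unset Printing Implicit Defensive.
Import GRing.Theory.
Local Open Scope ring_scope.

(* A word in the free semigroup on variables x_0, x_1, ... is a non-empty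
   sequence of variable indices. *)
Definition word := seq nat.

Definition eval_word (S : pzRingType) (s : nat -> S) (w : word) : S :=
  \prod_(i <- w) s i.

Definition satisfies (S : pzRingType) (u v : word) : Prop :=
  forall s : nat -> S, eval_word s u = eval_word s v.

Definition semigroup_identity (u v : word) : Prop :=
  [/\ u != [::], v != [::] & u != v].

Definition reduced (u v : word) : Prop :=
  exists x u1 y v1, u = x :: u1 /\ v = y :: v1 /\ x != y /\ last x u1 != last y v1.

Definition infinite_type (T : eqType) : Prop :=
  forall s : seq T, exists x : T, x \notin s.

Definition torsion_free (K : pzRingType) (M : lmodType K) : Prop :=
  forall (k : K) (m : M), k *: m = 0 -> k = 0 \/ m = 0.

(* Main.v *)
Require Import Defs.
From HB Require Import structures.
From mathcomp Require Import all_boot all_algebra zify.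
Local Open Scope ring_scope.
Import GRing.Theory.

Section NZ.
Variables (K : idomainType) (R : algType K).
Hypothesis H1 : (1 : R) != 0.
Hypothesis Kinf : infinite_type K.
Hypothesis Rtf : torsion_free R.

Definition nzR : Type := R.
HB.instance Definition _ := GRing.Algebra.on nzR.
HB.instance Definition _ := GRing.PzSemiRing_isNonZero.Build nzR H1.

Lemma exists_uniq (n : nat) : exists t : seq K, uniq t /\ size t = n.
Proof.
elim: n => [|n [t [ut st]]]; first by exists [::].
have [x xt] := Kinf t.
by exists (x :: t); rewrite /= xt ut st.
Qed.

Lemma vanish (p : {poly nzR}) : (forall l : K, p.[l%:A] = 0) -> p = 0.
Proof.
move=> hp; set n := size p.
have fE : forall l : K, \sum_(i < n) (l ^+ i) *: p`_i = 0.
  move=> l; rewrite -[RHS](hp l) horner_coef; apply: eq_bigr => i _.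
  by rewrite exprZn expr1n mulr_algr.
have [t [ut st]] := exists_uniq n.
pose a : 'rV[K]_n := \row_j t`_j.
pose V := Vandermonde n a.
have dV : \det V != 0.
  rewrite det_Vandermonde; apply/prodf_neq0 => i _; apply/prodf_neq0 => j ij.
  rewrite !mxE subr_eq0; apply/negP => /eqP.
  move/eqP; rewrite nth_uniq ?st ?ltn_ord // => /eqP /val_inj eji.
  by move: ij; rewrite eji ltnn.
have ck : forall k : 'I_n, p`_k = 0.
  move=> k.
  have : \det V *: p`_k = \sum_(j < n) (\adj V) j k *: \sum_(i < n) (a 0 j ^+ i) *: p`_i.
    transitivity (\sum_(i < n) ((V *m \adj V) i k) *: p`_i).
      rewrite mul_mx_adj (bigD1 k) //= big1 ?addr0; first by rewrite mxE eqxx mulr1n.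
      by move=> i ik; rewrite mxE (negbTE ik) mulr0n scale0r.
    under [RHS]eq_bigr => j _ do rewrite scaler_sumr.
    rewrite [RHS]exchange_big /=; apply: eq_bigr => i _.
    rewrite !mxE scaler_suml; apply: eq_bigr => j _.
    by rewrite scalerA mxE mulrC.
  rewrite big1 => [|j _]; last by rewrite fE scaler0.
  move=> h; have := Rtf (\det V) (p`_k : R) h; case=> [/eqP|//]; by rewrite (negbTE dV).
apply/polyP => i; rewrite coef0.
case: (ltnP i n) => [lin|gin]; first exact: (ck (Ordinal lin)).
by rewrite nth_default.
Qed.

Lemma cancel_l (A D : {poly nzR}) : A`_0 = 1 -> A * D = 0 -> D = 0.
Proof.
move=> A0 AD; apply/polyP => k; rewrite coef0.
elim: k {-2}k (leqnn k) => [|m IH] k km.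
  move: km; rewrite leqn0 => /eqP ->.
  have h := congr1 (fun q : {poly nzR} => q`_0) AD.
  by rewrite /= coefM big_ord1 A0 mul1r coef0 in h.
have h := congr1 (fun q : {poly nzR} => q`_k) AD.
rewrite /= coefM big_ord_recl A0 mul1r subn0 coef0 big1 ?addr0 in h; first exact h.
move=> j _; rewrite IH ?mulr0 // lift0; lia.
Qed.

Lemma cancel_r (D B : {poly nzR}) : B`_0 = 1 -> D * B = 0 -> D = 0.
Proof.
move=> B0 DB; apply/polyP => k; rewrite coef0.
elim: k {-2}k (leqnn k) => [|m IH] k km.
  move: km; rewrite leqn0 => /eqP ->.
  have h := congr1 (fun q : {poly nzR} => q`_0) DB.
  by rewrite /= coefMr big_ord1 B0 mulr1 coef0 in h.
have h := congr1 (fun q : {poly nzR} => q`_k) DB.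
rewrite /= coefMr big_ord_recl B0 mulr1 subn0 coef0 big1 ?addr0 in h; first exact h.
move=> j _; rewrite IH ?mul0r // lift0; lia.
Qed.

Variable s : nat -> R.
Definition Qp (z : nat) : {poly nzR} := 1 + ((s z - 1 : R) : nzR)%:P * 'X.
Definition Pw (w : word) : {poly nzR} := \prod_(i <- w) Qp i.

Lemma hornerPw (x : nzR) (w : word) : (forall r : nzR, x * r = r * x) ->
  (Pw w).[x] = \prod_(i <- w) (1 + (s i - 1 : nzR) * x).
Proof.
move=> cx; elim: w => [|z w IH]; first by rewrite /Pw !big_nil hornerC.
rewrite /Pw !big_cons hornerM_comm; last by rewrite /comm_poly cx.
by rewrite -/(Pw w) IH /Qp hornerD hornerC hornerMX hornerC.
Qed.

Lemma Pw0 (w : word) : (Pw w)`_0 = 1.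
Proof.
rewrite -horner_coef0 hornerPw ?big1 // => [i _|r]; first by rewrite mulr0 addr0.
by rewrite mul0r mulr0.
Qed.

Lemma main_nz (u' v' a b : word) :
  satisfies R (a ++ u' ++ b) (a ++ v' ++ b) -> eval_word s u' = eval_word s v'.
Proof.
move=> hs.
have cl : forall l : K, forall r : nzR, l%:A * r = r * l%:A.
  by move=> l r; rewrite mulr_algl mulr_algr.
have E : Pw a * Pw u' * Pw b - Pw a * Pw v' * Pw b = 0.
  apply: vanish => l.
  have := hs (fun z => 1 + (s z - 1) * l%:A).
  rewrite /eval_word hornerD hornerN.
  have -> : Pw a * Pw u' * Pw b = Pw (a ++ u' ++ b).
    by rewrite /Pw !big_cat /= mulrA.
  have -> : Pw a * Pw v' * Pw b = Pw (a ++ v' ++ b) by rewrite /Pw !big_cat /= mulrA.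
  by rewrite !hornerPw ?cl // => ->; rewrite subrr.
rewrite -mulrBl -mulrBr -mulrA in E.
have := @cancel_r _ _ (Pw0 b) (@cancel_l _ _ (Pw0 a) E).
move/eqP; rewrite subr_eq0 => /eqP /(congr1 (fun q => q.[1])).
rewrite !hornerPw => [|r|r]; [|by rewrite mul1r mulr1 ..].
rewrite /eval_word.
have hh : forall w : word, \prod_(i <- w) (1 + (s i - 1 : nzR) * 1) = \prod_(i <- w) s i.
  by move=> w; apply: eq_bigr => i _; rewrite mulr1 addrC subrK.
by rewrite !hh.
Qed.

End NZ.

Theorem proposition1p4 (K : idomainType) (R : algType K)
    (u v a b u' v' : word) :
  infinite_type K ->
  torsion_free R ->
  semigroup_identity u v ->
  satisfies R u v ->
  u = a ++ u' ++ b ->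
  v = a ++ v' ++ b ->
  reduced u' v' ->
  satisfies R u' v'.
Proof.
move=> Kinf Rtf _ huv eu ev _ s; subst u v.
have [H0|H1] := eqVneq (1 : R) 0.
  have all0 : forall x : R, x = 0 by move=> x; rewrite -[x]mulr1 H0 mulr0.
  by rewrite (all0 (eval_word s u')) (all0 (eval_word s v')).
exact: (@main_nz K R H1 Kinf Rtf s u' v' a b huv).
Qed.
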